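(* Let $p\in(0,1)$ be fixed, $q=1-p$. As $n\to\infty$, for every real $r>0$, $$f_r(n)=\frac{1}{(np)^r}\left(1+\frac{r(r+1)q}{2(np)}+\frac{r(r+1)(r+2)q(4+q+3rq)}{24(np)^2}+O\!\left(n^{-3}\right)\right).$$ In particular, $$f_1(n)=\frac{1}{np}\left(1+\frac{q}{np}+\frac{q(1+q)}{(np)^2}+\frac{q(1+4q+q^2)}{(np)^3}+\frac{q(1+q)(1+10q+q^2)}{(np)^4}+\frac{q(1+26q+66q^2+26q^3+q^4)}{(np)^5}+O(n^{-6})\right),$$ $$f_2(n)=\frac{1}{(np)^2}\left(1+\frac{3q}{np}+\frac{q(4+7q)}{(np)^2}+\frac{5q(1+6q+3q^2)}{(np)^3}+\frac{q(6+91q+146q^2+31q^3)}{(np)^4}+O(n^{-5})\right),$$ $$f_3(n)=\frac{1}{(np)^3}\left(1+\frac{6q}{np}+\frac{5q(2+5q)}{(np)^2}+\frac{15q(1+8q+6q^2)}{(np)^3}+\frac{7q(3+58q+128q^2+43q^3)}{(np)^4}+O(n^{-5})\right).$$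
   Context: For a positive integer $n$ and real $r>0$, $f_r(n)=\sum_{i=1}^n\binom{n}{i}p^iq^{n-i}\,i^{-r}$ (the $r$-th inverse moment of the positive binomial distribution times $1-q^n$). *)

(* Defs.v *)
From Stdlib Require Import Reals List Lra Lia.
Open Scope R_scope.

Definition f_r (p r : R) (n : nat) : R :=
  fold_right Rplus 0
    (map (fun i => C n i * p ^ i * (1 - p) ^ (n - i) * Rpower (INR i) (- r))
         (seq 1 n)).

Definition bigO_inv_pow (E : nat -> R) (k : nat) : Prop :=
  exists K : R, exists N : nat, forall n : nat, (N <= n)%nat ->
    Rabs (E n) <= K / (INR n) ^ k.

(* Main.v *)
Require Import Defs.
From Coquelicot Require Import Coquelicot.
From Stdlib Require Import Reals List Lra Lia Factorial ZArith.
Import ListNotations.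
Open Scope R_scope.

Fixpoint binom (n k : nat) : R :=
  match n, k with
  | O, O => 1 | O, S _ => 0 | S _, O => 1
  | S n', S k' => binom n' k' + binom n' (S k') end.

Lemma binom_gt : forall n k, (n < k)%nat -> binom n k = 0.
Proof.
  induction n; intros [|k] H; simpl; try lia; auto.
  rewrite !IHn; try lia; ring.
Qed.

Lemma binom_ge0 : forall n k, 0 <= binom n k.
Proof. induction n; intros [|k]; simpl; try lra.
  pose proof (IHn k); pose proof (IHn (S k)); lra. Qed.

Lemma C_n_0' : forall n, C n 0 = 1.
Proof. intros n. unfold C. rewrite Nat.sub_0_r. simpl.
  assert (INR (fact n) <> 0) by (apply not_0_INR; apply fact_neq_0). field; auto. Qed.

Lemma C_n_n' : forall n, C n n = 1.
Proof. intros n. unfold C. rewrite Nat.sub_diag. simpl.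
  assert (INR (fact n) <> 0) by (apply not_0_INR; apply fact_neq_0). field; auto. Qed.

Lemma binom_C : forall n k, (k <= n)%nat -> binom n k = C n k.
Proof.
  induction n; intros [|k] H; simpl.
  - rewrite C_n_0'; auto.
  - lia.
  - rewrite C_n_0'; auto.
  - destruct (Nat.eq_dec k n).
    + subst. rewrite (binom_gt n (S n)) by lia. rewrite IHn by lia. rewrite C_n_n', C_n_n'. ring.
    + rewrite !IHn by lia. apply pascal. lia.
Qed.

Lemma binom_absorb : forall n i, binom n i * (INR n + 1) = binom (S n) (S i) * (INR i + 1).
Proof.
  intros n i. destruct (Compare_dec.le_lt_dec i n) as [Hi|Hi].
  - rewrite !binom_C by lia. unfold C.
    replace (S n - S i)%nat with (n - i)%nat by lia.
    rewrite !fact_simpl, !mult_INR, !S_INR.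
    assert (INR (fact n) <> 0) by (apply not_0_INR; apply fact_neq_0).
    assert (INR (fact i) <> 0) by (apply not_0_INR; apply fact_neq_0).
    assert (INR (fact (n-i)) <> 0) by (apply not_0_INR; apply fact_neq_0).
    assert (0 <= INR i) by apply pos_INR.
    field; repeat split; auto; lra.
  - rewrite !binom_gt by lia. ring.
Qed.

Fixpoint sm (f : nat -> R) (n : nat) : R :=
  match n with O => 0 | S m => sm f m + f m end.

Lemma sm_ext : forall f g n, (forall i, (i < n)%nat -> f i = g i) -> sm f n = sm g n.
Proof. intros f g n; induction n; intros H; simpl; auto. rewrite IHn, H; auto. Qed.

Lemma sm_plus : forall f g n, sm (fun i => f i + g i) n = sm f n + sm g n.
Proof. intros f g n; induction n; simpl; try rewrite IHn; ring. Qed.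

Lemma sm_scal : forall c f n, sm (fun i => c * f i) n = c * sm f n.
Proof. intros c f n; induction n; simpl; try rewrite IHn; ring. Qed.

Lemma sm_shift : forall f n, sm f (S n) = f O + sm (fun i => f (S i)) n.
Proof. intros f n; induction n; simpl in *; try rewrite IHn; ring. Qed.

Lemma sm_le : forall f g n, (forall i, (i < n)%nat -> f i <= g i) -> sm f n <= sm g n.
Proof. intros f g n; induction n; intros H; simpl; try lra.
  pose proof (H n ltac:(lia)). pose proof (IHn (fun i Hi => H i ltac:(lia))). lra. Qed.

Lemma sm_abs : forall f n, Rabs (sm f n) <= sm (fun i => Rabs (f i)) n.
Proof. intros f n; induction n; simpl. rewrite Rabs_R0; lra.
  eapply Rle_trans. apply Rabs_triang. lra. Qed.

Definition bb (p : R) (n k : nat) : R := binom n k * p ^ k * (1 - p) ^ (n - k).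

Definition Ex (p : R) (n : nat) (g : nat -> R) : R := sm (fun k => bb p n k * g k) (S n).

Lemma bb_ge0 : forall p n k, 0 <= p <= 1 -> 0 <= bb p n k.
Proof. intros. unfold bb. apply Rmult_le_pos. apply Rmult_le_pos. apply binom_ge0.
  apply pow_le; lra. apply pow_le; lra. Qed.

Lemma binom_n0 : forall n, binom n 0 = 1.
Proof. destruct n; reflexivity. Qed.

Lemma bb_S0 : forall p n, bb p (S n) 0 = (1 - p) * bb p n 0.
Proof. intros. unfold bb. rewrite !binom_n0. simpl. rewrite Nat.sub_0_r. ring. Qed.

Lemma bb_SS : forall p n k, bb p (S n) (S k) = p * bb p n k + (1 - p) * bb p n (S k).
Proof. intros. unfold bb. simpl binom. replace (S n - S k)%nat with (n - k)%nat by lia.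
  destruct (Compare_dec.le_lt_dec n k).
  - rewrite (binom_gt n (S k)) by lia. simpl. ring.
  - replace (n - k)%nat with (S (n - S k)) by lia. simpl. ring.
Qed.

Lemma bb_out : forall p n, bb p n (S n) = 0.
Proof. intros. unfold bb. rewrite binom_gt by lia. ring. Qed.

Lemma Ex_pascal : forall p n g,
  Ex p (S n) g = (1 - p) * Ex p n g + p * Ex p n (fun i => g (S i)).
Proof.
  intros p n g. unfold Ex.
  rewrite sm_shift. rewrite bb_S0.
  rewrite (sm_ext _ (fun i => p * (bb p n i * g (S i)) + (1-p) * (bb p n (S i) * g (S i))))
    by (intros; rewrite bb_SS; ring).
  rewrite sm_plus, !sm_scal.
  assert (E : sm (fun k => bb p n k * g k) (S n) =
              bb p n O * g O + sm (fun i => bb p n (S i) * g (S i)) (S n)).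
  { transitivity (sm (fun k => bb p n k * g k) (S (S n))).
    - change (sm (fun k => bb p n k * g k) (S (S n))) with (sm (fun k => bb p n k * g k) (S n) + bb p n (S n) * g (S n)). rewrite bb_out. ring.
    - apply sm_shift. }
  rewrite E. ring.
Qed.

Lemma Ex_ext : forall p n f g, (forall i, (i <= n)%nat -> f i = g i) -> Ex p n f = Ex p n g.
Proof. intros. unfold Ex. apply sm_ext. intros. rewrite H by lia. auto. Qed.

Lemma Ex_plus : forall p n f g, Ex p n (fun i => f i + g i) = Ex p n f + Ex p n g.
Proof. intros. unfold Ex. rewrite <- sm_plus. apply sm_ext. intros; ring. Qed.

Lemma Ex_scal : forall p n c f, Ex p n (fun i => c * f i) = c * Ex p n f.
Proof. intros. unfold Ex. rewrite <- sm_scal. apply sm_ext. intros; ring. Qed.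

Lemma Ex_minus : forall p n f g, Ex p n (fun i => f i - g i) = Ex p n f - Ex p n g.
Proof. intros. unfold Rminus. rewrite Ex_plus.
  rewrite (Ex_ext p n (fun i => - g i) (fun i => -1 * g i)) by (intros; ring).
  rewrite Ex_scal. ring. Qed.

Lemma Ex_const : forall p n c, Ex p n (fun _ => c) = c.
Proof. intros p n c; induction n. unfold Ex, bb; simpl; ring.
  rewrite Ex_pascal, IHn. ring. Qed.

Lemma Ex_le : forall p n f g, 0 <= p <= 1 ->
  (forall i, (i <= n)%nat -> f i <= g i) -> Ex p n f <= Ex p n g.
Proof. intros. unfold Ex. apply sm_le. intros. apply Rmult_le_compat_l.
  apply bb_ge0; auto. apply H0; lia. Qed.

Lemma Ex_abs : forall p n f, 0 <= p <= 1 ->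
  Rabs (Ex p n f) <= Ex p n (fun i => Rabs (f i)).
Proof. intros. unfold Ex. eapply Rle_trans. apply sm_abs. apply sm_le. intros.
  rewrite Rabs_mult, (Rabs_right (bb p n i)). lra. apply Rle_ge, bb_ge0; auto. Qed.

Lemma Ex_geom : forall p n t, Ex p n (fun i => t ^ i) = (1 - p + p * t) ^ n.
Proof. intros p n t; induction n. unfold Ex, bb; simpl; ring.
  rewrite Ex_pascal.
  rewrite (Ex_ext p n (fun i => t ^ S i) (fun i => t * t ^ i)) by (intros; simpl; ring).
  rewrite Ex_scal. change (pow t) with (fun i => t ^ i). cbv beta. rewrite IHn. simpl. ring. Qed.

Lemma Ex_ind0 : forall p n c, Ex p n (fun i => match i with O => c | S _ => 0 end) = (1-p)^n * c.
Proof. intros. unfold Ex. rewrite sm_shift.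
  rewrite (sm_ext _ (fun _ => 0 * 0)) by (intros; ring). rewrite sm_scal.
  unfold bb. rewrite binom_n0. rewrite Nat.sub_0_r. ring. Qed.

Lemma fold_seq : forall h s m,
  fold_right Rplus 0 (map h (seq s m)) = sm (fun i => h (s + i)%nat) m.
Proof. intros h s m; revert s; induction m; intros s; cbn [seq map fold_right]. auto.
  rewrite IHm. rewrite sm_shift. rewrite Nat.add_0_r.
  rewrite (sm_ext (fun i => h (s + S i)%nat) (fun i => h (S s + i)%nat)) by (intros; f_equal; lia).
  ring. Qed.

Definition G0 (r : R) (i : nat) : R := match i with O => 0 | S _ => Rpower (INR i) (- r) end.

Lemma f_r_Ex : forall p r n, f_r p r n = Ex p n (G0 r).
Proof. intros. unfold f_r, Ex. rewrite fold_seq. rewrite sm_shift.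
  simpl G0 at 1. rewrite Rmult_0_r, Rplus_0_l. apply sm_ext. intros i Hi.
  simpl (1 + i)%nat. unfold bb. rewrite binom_C by lia. unfold G0. auto. Qed.

Definition mc2 (p : R) (n : nat) : R := (INR n*p - INR n*p^2).
Definition mc3 (p : R) (n : nat) : R := (INR n*p - 3*INR n*p^2 + 2*INR n*p^3).
Definition mc4 (p : R) (n : nat) : R := (INR n*p - 7*INR n*p^2 + 12*INR n*p^3 - 6*INR n*p^4 + 3*INR n^2*p^2 - 6*INR n^2*p^3 + 3*INR n^2*p^4).
Definition mc5 (p : R) (n : nat) : R := (INR n*p - 15*INR n*p^2 + 50*INR n*p^3 - 60*INR n*p^4 + 24*INR n*p^5 + 10*INR n^2*p^2 - 40*INR n^2*p^3 + 50*INR n^2*p^4 - 20*INR n^2*p^5).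
Definition mc6 (p : R) (n : nat) : R := (INR n*p - 31*INR n*p^2 + 180*INR n*p^3 - 390*INR n*p^4 + 360*INR n*p^5 - 120*INR n*p^6 + 25*INR n^2*p^2 - 180*INR n^2*p^3 + 415*INR n^2*p^4 - 390*INR n^2*p^5 + 130*INR n^2*p^6 + 15*INR n^3*p^3 - 45*INR n^3*p^4 + 45*INR n^3*p^5 - 15*INR n^3*p^6).

Definition mom (p : R) (n k : nat) : R := Ex p n (fun i => (INR i - INR n * p) ^ k).

Lemma mom_rec : forall p n k, mom p (S n) k =
  Ex p n (fun i => (1 - p) * ((INR i - INR n * p) - p) ^ k + p * ((INR i - INR n * p) + (1 - p)) ^ k).
Proof. intros. unfold mom. rewrite Ex_pascal, Ex_plus, !Ex_scal. f_equal; f_equal.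
  - apply Ex_ext; intros. rewrite S_INR. f_equal. ring.
  - apply Ex_ext; intros. rewrite !S_INR. f_equal. ring.
Qed.

Lemma Ex_polyd : forall p n (a : nat -> R) K,
  Ex p n (fun i => sm (fun j => a j * (INR i - INR n * p) ^ j) K) = sm (fun j => a j * mom p n j) K.
Proof. intros p n a K; induction K.
  - simpl. rewrite (Ex_const p n 0). auto.
  - simpl. rewrite Ex_plus, IHK, Ex_scal. auto.
Qed.

Definition wk (p : R) (k j : nat) : R := binom k j * ((1 - p) * (- p) ^ (k - j) + p * (1 - p) ^ (k - j)).

Lemma mom_rec2 : forall p n k, (k <= 6)%nat ->
  mom p (S n) k = sm (fun j => wk p k j * mom p n j) (S k).
Proof. intros p n k Hk. rewrite mom_rec, <- Ex_polyd. apply Ex_ext. intros i _.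
  set (d := INR i - INR n * p).
  do 7 (destruct k as [|k]; [unfold wk; simpl; ring|]). lia.
Qed.

Lemma mom0 : forall p n, mom p n 0 = 1.
Proof. intros. unfold mom. simpl. apply Ex_const. Qed.

Lemma mom1 : forall p n, mom p n 1 = 0.
Proof. intros p n; induction n.
  - unfold mom, Ex, bb. simpl. ring.
  - rewrite mom_rec2 by lia. unfold wk. simpl. rewrite IHn, mom0. ring.
Qed.

Ltac mom_step IH := rewrite mom_rec2 by lia; unfold wk; simpl sm; simpl binom; simpl Nat.sub;
  rewrite ?mom0, ?mom1; rewrite IH.

Lemma mom2 : forall p n, mom p n 2 = mc2 p n.
Proof. intros p n; induction n.
  - unfold mom, Ex, bb, mc2. simpl. ring.
  - rewrite mom_rec2 by lia. unfold wk. simpl sm. rewrite mom0, mom1, IHn. unfold mc2. rewrite S_INR. simpl. ring.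
Qed.

Lemma mom3 : forall p n, mom p n 3 = mc3 p n.
Proof. intros p n; induction n.
  - unfold mom, Ex, bb, mc3. simpl. ring.
  - rewrite mom_rec2 by lia. unfold wk. simpl sm. rewrite mom0, mom1, mom2, IHn. unfold mc2, mc3. rewrite S_INR. simpl. ring.
Qed.

Lemma mom4 : forall p n, mom p n 4 = mc4 p n.
Proof. intros p n; induction n.
  - unfold mom, Ex, bb, mc4. simpl. ring.
  - rewrite mom_rec2 by lia. unfold wk. simpl sm. rewrite mom0, mom1, mom2, mom3, IHn. unfold mc2, mc3, mc4. rewrite S_INR. simpl. ring.
Qed.

Lemma mom5 : forall p n, mom p n 5 = mc5 p n.
Proof. intros p n; induction n.
  - unfold mom, Ex, bb, mc5. simpl. ring.
  - rewrite mom_rec2 by lia. unfold wk. simpl sm. rewrite mom0, mom1, mom2, mom3, mom4, IHn. unfold mc2, mc3, mc4, mc5. rewrite S_INR. simpl. ring.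
Qed.

Lemma mom6 : forall p n, mom p n 6 = mc6 p n.
Proof. intros p n; induction n.
  - unfold mom, Ex, bb, mc6. simpl. ring.
  - rewrite mom_rec2 by lia. unfold wk. simpl sm. rewrite mom0, mom1, mom2, mom3, mom4, mom5, IHn. unfold mc2, mc3, mc4, mc5, mc6. rewrite S_INR. simpl. ring.
Qed.

Lemma Bern : forall d n, 0 <= d -> 1 + INR n * d <= (1 + d) ^ n.
Proof. intros d n Hd; induction n. simpl; lra.
  rewrite S_INR. simpl. pose proof (pos_INR n).
  assert (0 <= INR n * d * d) by (apply Rmult_le_pos; [apply Rmult_le_pos|]; lra). nra. Qed.

Lemma geom_decay : forall rho k, 0 <= rho < 1 ->
  exists K, forall n, (1 <= n)%nat -> rho ^ n <= K / INR n ^ k.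
Proof.
  intros rho k Hr. destruct k as [|k].
  { exists 1. intros n Hn. simpl. unfold Rdiv. rewrite Rinv_1, Rmult_1_r.
    apply Rle_trans with (1 ^ n). apply pow_incr; lra. rewrite pow1; lra. }
  destruct (Req_dec rho 0) as [H0|H0].
  { exists 0. intros n Hn. subst. rewrite pow_i by lia. unfold Rdiv. rewrite Rmult_0_l. lra. }
  assert (Hr0 : 0 < rho) by lra.
  set (s := Rpower rho (/ INR (S k))).
  assert (HSk : 0 < INR (S k)) by (apply lt_0_INR; lia).
  assert (Hs0 : 0 < s) by (unfold s, Rpower; apply exp_pos).
  assert (Hs1 : s < 1).
  { unfold s, Rpower. rewrite <- exp_0. apply exp_increasing.
    assert (ln rho < 0) by (rewrite <- ln_1; apply ln_increasing; lra).
    assert (0 < / INR (S k)) by (apply Rinv_0_lt_compat; lra). nra. }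
  assert (Hsk : s ^ (S k) = rho).
  { unfold s. rewrite <- Rpower_pow by (unfold Rpower; apply exp_pos).
    rewrite Rpower_mult. rewrite Rinv_l by lra. apply Rpower_1; lra. }
  set (d := / s - 1).
  assert (Hd : 0 < d).
  { unfold d. assert (1 < / s). { rewrite <- Rinv_1. apply Rinv_lt_contravar; lra. } lra. }
  exists (/ d ^ (S k)). intros n Hn.
  assert (Hn0 : 0 < INR n) by (apply lt_0_INR; lia).
  assert (Hsn : s ^ n <= / (INR n * d)).
  { assert (H1 : INR n * d <= (1 + d) ^ n) by (pose proof (Bern d n); lra).
    replace (1 + d) with (/ s) in H1 by (unfold d; ring).
    rewrite pow_inv in H1.
    assert (0 < s ^ n) by (apply pow_lt; lra).
    assert (0 < INR n * d) by (apply Rmult_lt_0_compat; lra).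
    apply (Rmult_le_reg_r (INR n * d)); auto. rewrite Rinv_l by lra.
    apply (Rmult_le_reg_l (/ s ^ n)). apply Rinv_0_lt_compat; auto.
    rewrite <- Rmult_assoc, Rinv_l by lra. lra. }
  rewrite <- Hsk, <- pow_mult, Nat.mul_comm, pow_mult.
  apply Rle_trans with ((/ (INR n * d)) ^ S k).
  { apply pow_incr. split; auto. apply pow_le; lra. }
  rewrite pow_inv, Rpow_mult_distr. unfold Rdiv.
  rewrite Rinv_mult. lra.
Qed.

Lemma bnd_cont : forall (f : R -> R) a b, a <= b ->
  (forall x, a <= x <= b -> ex_derive f x) ->
  exists M, forall x, a <= x <= b -> Rabs (f x) <= M.
Proof.
  intros f a b Hab H.
  destruct (bounded_continuity f a b) as [M HM].
  { intros x Hx. apply ex_derive_continuous. apply H; auto. }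
  exists M. intros x Hx. specialize (HM x Hx). apply Rlt_le. exact HM.
Qed.

Fixpoint H (k i : nat) : R := match k with O => 1 | S k' => H k' (S i) / (INR i + 1) end.
Fixpoint Mk (p : R) (k n : nat) : R := match k with O => 1 | S k' => Mk p k' (S n) / ((INR n + 1) * p) end.
Definition Fk (p : R) (k n : nat) : R := Ex p n (H k).

Lemma H_pos : forall k i, 0 < H k i.
Proof. induction k; intros i; simpl. lra. pose proof (pos_INR i).
  apply Rdiv_lt_0_compat; auto; lra. Qed.

Lemma H_le1 : forall k i, H k i <= 1.
Proof. induction k; intros i; simpl. lra. pose proof (pos_INR i). pose proof (H_pos k (S i)).
  specialize (IHk (S i)). unfold Rdiv. apply Rle_trans with (H k (S i) * 1).
  apply Rmult_le_compat_l. lra. rewrite <- Rinv_1. apply Rinv_le_contravar; lra. lra. Qed.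

Lemma Ex_absorb : forall p n h, 0 < p ->
  Ex p n (fun i => h (S i) / (INR i + 1)) = (Ex p (S n) h - (1 - p) ^ (S n) * h O) / ((INR n + 1) * p).
Proof.
  intros p n h Hp. unfold Ex at 2. rewrite sm_shift.
  replace (bb p (S n) 0) with ((1 - p) ^ S n)
    by (unfold bb; rewrite binom_n0; simpl; ring).
  replace ((1 - p) ^ S n * h 0%nat + sm (fun i => bb p (S n) (S i) * h (S i)) (S n) - (1 - p) ^ S n * h 0%nat)
    with (sm (fun i => bb p (S n) (S i) * h (S i)) (S n)) by ring.
  unfold Rdiv at 2. rewrite Rmult_comm, <- sm_scal. unfold Ex. apply sm_ext. intros i Hi.
  pose proof (binom_absorb n i). pose proof (pos_INR i). pose proof (pos_INR n).
  unfold bb. replace (S n - S i)%nat with (n - i)%nat by lia.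
  assert (E : binom (S n) (S i) = binom n i * (INR n + 1) / (INR i + 1)) by (rewrite H0; field; lra).
  rewrite E. simpl. field. lra.
Qed.

Lemma Fk_rec : forall p k n, 0 < p ->
  Fk p (S k) n = (Fk p k (S n) - (1 - p) ^ (S n) * H k O) / ((INR n + 1) * p).
Proof. intros. unfold Fk. rewrite <- Ex_absorb by auto. apply Ex_ext. intros; reflexivity. Qed.

Lemma Fk0 : forall p n, Fk p 0 n = 1.
Proof. intros. unfold Fk. simpl. apply Ex_const. Qed.

Lemma Fk_approx : forall p, 0 < p < 1 -> forall k, exists D, 0 <= D /\
  forall n, Rabs (Fk p k n - Mk p k n) <= D * (1 - p) ^ n.
Proof.
  intros p Hp k; induction k.
  - exists 0. split. lra. intros. rewrite Fk0. simpl. rewrite Rminus_diag, Rabs_R0. lra.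
  - destruct IHk as [D [HD HDn]]. exists ((D + 1) / p). split.
    { apply Rdiv_le_0_compat; lra. }
    intros n. rewrite Fk_rec by lra. simpl Mk.
    pose proof (pos_INR n). pose proof (H_pos k 0). pose proof (H_le1 k 0).
    assert (Hq : 0 <= (1 - p) ^ n) by (apply pow_le; lra).
    replace ((Fk p k (S n) - (1 - p) ^ S n * H k 0%nat) / ((INR n + 1) * p) - Mk p k (S n) / ((INR n + 1) * p))
      with ((Fk p k (S n) - Mk p k (S n) - (1 - p) ^ S n * H k 0%nat) / ((INR n + 1) * p)) by (field; lra).
    unfold Rdiv. rewrite Rabs_mult, (Rabs_right (/ _)).
    2:{ apply Rle_ge, Rlt_le, Rinv_0_lt_compat. nra. }
    specialize (HDn (S n)). simpl pow in *.
    assert (A : Rabs (Fk p k (S n) - Mk p k (S n) - (1 - p) * (1 - p) ^ n * H k 0%nat) <= (D + 1) * (1 - p) ^ n).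
    { eapply Rle_trans. apply Rabs_triang. rewrite Rabs_Ropp, (Rabs_right ((1-p)*(1-p)^n*H k 0%nat)).
      2:{ apply Rle_ge. apply Rmult_le_pos. apply Rmult_le_pos; lra. lra. }
      assert ((1-p) * (1-p)^n * H k 0%nat <= (1-p)^n). { 
        apply Rle_trans with (1 * (1-p)^n * 1). apply Rmult_le_compat. apply Rmult_le_pos; lra. lra.
        apply Rmult_le_compat_r; lra. lra. lra. }
      assert (D * ((1 - p) * (1 - p) ^ n) <= D * (1-p)^n) by (apply Rmult_le_compat_l; nra). lra. }
    assert (B : / ((INR n + 1) * p) <= / p).
    { apply Rinv_le_contravar. lra. nra. }
    apply Rle_trans with ((D + 1) * (1 - p) ^ n * / p).
    apply Rmult_le_compat. apply Rabs_pos. left; apply Rinv_0_lt_compat; nra. auto. auto.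
    unfold Rdiv. lra.
Qed.

Lemma Mk_pos : forall p k n, 0 < p -> 0 < Mk p k n.
Proof. intros p k; induction k; intros n Hp; simpl. lra. pose proof (pos_INR n).
  apply Rdiv_lt_0_compat; auto. nra. Qed.

Lemma Mk_bound : forall p k n, 0 < p -> (1 <= n)%nat -> Mk p k n <= / (INR n ^ k * p ^ k).
Proof. intros p k; induction k; intros n Hp Hn; simpl. lra.
  assert (Hn0 : 1 <= INR n) by (apply (le_INR 1); auto).
  specialize (IHk (S n) Hp ltac:(lia)). rewrite S_INR in IHk.
  assert (0 < INR n ^ k) by (apply pow_lt; lra). assert (0 < p ^ k) by (apply pow_lt; lra).
  assert (INR n ^ k <= (INR n + 1) ^ k) by (apply pow_incr; lra).
  unfold Rdiv. apply Rle_trans with (/ ((INR n + 1) ^ k * p ^ k) * / ((INR n + 1) * p)).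
  apply Rmult_le_compat_r. left; apply Rinv_0_lt_compat; nra. auto.
  rewrite <- Rinv_mult. apply Rinv_le_contravar. 
  apply Rmult_lt_0_compat; apply Rmult_lt_0_compat; lra.
  assert (INR n * INR n ^ k <= (INR n + 1) * (INR n + 1) ^ k) by (apply Rmult_le_compat; lra).
  assert (0 < p * p ^ k) by (apply Rmult_lt_0_compat; lra). nra.
Qed.

Lemma H_lower : forall k, exists c, 0 < c /\ forall i, (1 <= i)%nat -> / INR i ^ k <= c * H k i.
Proof.
  induction k.
  - exists 1. split. lra. intros. simpl. lra.
  - destruct IHk as [c [Hc Hci]]. exists (c * 2 ^ (S k)). split.
    { apply Rmult_lt_0_compat; auto. apply pow_lt; lra. }
    intros i Hi. simpl H. specialize (Hci (S i) ltac:(lia)). rewrite S_INR in Hci.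
    assert (Hi0 : 1 <= INR i) by (apply (le_INR 1); auto).
    assert (A : / (INR i + 1) ^ S k <= c * (H k (S i) / (INR i + 1))).
    { simpl. rewrite Rinv_mult. unfold Rdiv. rewrite (Rmult_comm (H _ _)), <- Rmult_assoc, (Rmult_comm c), Rmult_assoc.
      apply Rmult_le_compat_l. left; apply Rinv_0_lt_compat; lra. auto. }
    assert (B : / INR i ^ S k <= 2 ^ S k * / (INR i + 1) ^ S k).
    { rewrite <- pow_inv, <- pow_inv, <- Rpow_mult_distr. apply pow_incr. split.
      left; apply Rinv_0_lt_compat; lra.
      apply (Rmult_le_reg_l (INR i * (INR i + 1))). nra. field_simplify; lra. }
    assert (0 <= 2 ^ S k) by (apply pow_le; lra). nra.
Qed.

Lemma Ex_sm : forall p n (f : nat -> nat -> R) K,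
  Ex p n (fun i => sm (fun k => f k i) K) = sm (fun k => Ex p n (f k)) K.
Proof. intros p n f K; induction K; simpl. apply (Ex_const p n 0). rewrite Ex_plus, IHK. auto. Qed.

Definition Gn (r i : nat) : R := match i with O => 0 | S _ => / INR i ^ r end.

Lemma err_sum : forall p (a : nat -> R), 0 < p < 1 -> forall K, exists A,
  forall n, Rabs (sm (fun k => a k * (Fk p k n - Mk p k n)) K) <= A * (1 - p) ^ n.
Proof.
  intros p a Hp K; induction K.
  - exists 0. intros. simpl. rewrite Rabs_R0. lra.
  - destruct IHK as [A HA]. destruct (Fk_approx p Hp K) as [D [HD HDn]].
    exists (A + Rabs (a K) * D). intros n. simpl sm.
    eapply Rle_trans. apply Rabs_triang. rewrite Rabs_mult.
    specialize (HA n). specialize (HDn n).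
    assert (Rabs (a K) * Rabs (Fk p K n - Mk p K n) <= Rabs (a K) * (D * (1-p)^n))
      by (apply Rmult_le_compat_l; auto; apply Rabs_pos). lra.
Qed.

Lemma int_case : forall p (r K : nat) (a : nat -> R) (tgt : nat -> R), 0 < p < 1 ->
  (exists M, forall i, (1 <= i)%nat ->
     Rabs (/ INR i ^ r - sm (fun k => a k * H k i) (S K)) <= M / INR i ^ (S K)) ->
  (exists M N, forall n, (N <= n)%nat ->
     Rabs (sm (fun k => a k * Mk p k n) (S K) - tgt n) <= M / INR n ^ (S K)) ->
  exists C N, forall n, (N <= n)%nat -> Rabs (Ex p n (Gn r) - tgt n) <= C / INR n ^ (S K).
Proof.
  intros p r K a tgt Hp [M HM] [Mt [Nt HMt]].
  assert (HM0 : 0 <= M).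
  { specialize (HM 1%nat (le_n 1)). rewrite INR_1, !pow1 in HM.
    unfold Rdiv in HM. rewrite Rinv_1, Rmult_1_r in HM.
    pose proof (Rabs_pos (1 - sm (fun k => a k * H k 1%nat) (S K))). lra. }
  set (c0 := sm (fun k => a k * H k O) (S K)).
  set (Rem := fun i : nat => match i with O => 0 | S _ => / INR i ^ r - sm (fun k => a k * H k i) (S K) end).
  destruct (H_lower (S K)) as [c [Hc Hci]].
  destruct (Fk_approx p Hp (S K)) as [D [HD HDn]].
  destruct (err_sum p a Hp (S K)) as [A HA].
  assert (HA0 : 0 <= A).
  { specialize (HA O). simpl pow in HA. pose proof (Rabs_pos (sm (fun k => a k * (Fk p k 0 - Mk p k 0)) (S K))). lra. }
  destruct (geom_decay (1 - p) (S K) ltac:(lra)) as [Kg HKg].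
  exists (Mt + (A + Rabs c0 + M * c * D) * Kg + M * c / p ^ S K), (max Nt 1).
  intros n Hn.
  assert (Hn1 : (1 <= n)%nat) by lia.
  assert (Hnr : 1 <= INR n) by (apply (le_INR 1); auto).
  assert (Hpow : 0 < INR n ^ S K) by (apply pow_lt; lra).
  assert (Hpp : 0 < p ^ S K) by (apply pow_lt; lra).
  set (y := / INR n ^ S K).
  assert (Hy : 0 < y) by (apply Rinv_0_lt_compat; auto).
  assert (Hdec : Ex p n (Gn r) = sm (fun k => a k * Mk p k n) (S K) + sm (fun k => a k * (Fk p k n - Mk p k n)) (S K) - (1-p)^n * c0 + Ex p n Rem).
  { rewrite (Ex_ext p n (Gn r) (fun i => (sm (fun k => a k * H k i) (S K) - match i with O => c0 | S _ => 0 end) + Rem i))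
      by (intros [|j] _; unfold Rem, c0, Gn; cbv beta iota; ring).
    rewrite Ex_plus, Ex_minus, Ex_ind0, Ex_sm.
    assert (E1 : sm (fun k => Ex p n (fun i => a k * H k i)) (S K) = sm (fun k => a k * Mk p k n) (S K) + sm (fun k => a k * (Fk p k n - Mk p k n)) (S K)).
    { rewrite <- sm_plus. apply sm_ext. intros k _. rewrite Ex_scal. unfold Fk. ring. }
    rewrite E1. ring. }
  assert (HRem : Rabs (Ex p n Rem) <= M * c * Fk p (S K) n).
  { eapply Rle_trans. apply Ex_abs; lra. unfold Fk. rewrite <- Ex_scal.
    apply Ex_le. lra. intros [|j] _.
    - unfold Rem. rewrite Rabs_R0. pose proof (H_pos (S K) 0). assert (0 <= M * c) by nra. nra.
    - unfold Rem. eapply Rle_trans. apply HM. lia.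
      specialize (Hci (S j) ltac:(lia)). unfold Rdiv. rewrite Rmult_assoc. apply Rmult_le_compat_l; auto. }
  assert (HF : Fk p (S K) n <= y * / p ^ S K + D * (1 - p) ^ n).
  { specialize (HDn n). pose proof (Mk_bound p (S K) n ltac:(lra) Hn1).
    unfold y. rewrite <- Rinv_mult. apply Rabs_le_between in HDn. lra. }
  assert (HG : (1 - p) ^ n <= Kg * y) by (unfold y; apply HKg; auto).
  assert (HMt' : Rabs (sm (fun k => a k * Mk p k n) (S K) - tgt n) <= Mt * y).
  { unfold y. apply HMt. lia. }
  specialize (HA n).
  assert (Hq : 0 <= (1 - p) ^ n) by (apply pow_le; lra).
  assert (H1 : A * (1 - p) ^ n <= A * (Kg * y)) by (apply Rmult_le_compat_l; auto).
  assert (H2 : Rabs c0 * (1 - p) ^ n <= Rabs c0 * (Kg * y)) by (apply Rmult_le_compat_l; auto; apply Rabs_pos).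
  assert (HMc : 0 <= M * c) by nra.
  assert (H3 : M * c * Fk p (S K) n <= M * c * (y * / p ^ S K + D * (1 - p) ^ n)) by (apply Rmult_le_compat_l; auto).
  assert (H4 : M * c * D * (1 - p) ^ n <= M * c * D * (Kg * y)) by (apply Rmult_le_compat_l; auto; nra).
  rewrite Hdec.
  replace (sm (fun k => a k * Mk p k n) (S K) + sm (fun k => a k * (Fk p k n - Mk p k n)) (S K) - (1 - p) ^ n * c0 + Ex p n Rem - tgt n)
    with ((sm (fun k => a k * Mk p k n) (S K) - tgt n) + sm (fun k => a k * (Fk p k n - Mk p k n)) (S K) + (- ((1 - p) ^ n * c0)) + Ex p n Rem) by ring.
  eapply Rle_trans. apply Rabs_triang.
  eapply Rle_trans. apply Rplus_le_compat_r. apply Rabs_triang.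
  eapply Rle_trans. apply Rplus_le_compat_r. apply Rplus_le_compat_r. apply Rabs_triang.
  rewrite Rabs_Ropp, Rabs_mult, (Rabs_right ((1-p)^n)) by lra.
  unfold Rdiv. fold y.
  replace ((Mt + (A + Rabs c0 + M * c * D) * Kg + M * c * / p ^ S K) * y)
    with (Mt * y + A * (Kg * y) + Rabs c0 * (Kg * y) + M * c * (y * / p ^ S K) + M * c * D * (Kg * y)) by ring.
  lra.
Qed.

Lemma via_y : forall (g : nat -> R) (Sf : R -> R) m,
  (exists M, forall y, 0 <= y <= 1 -> Rabs (Sf y) <= M) ->
  (forall i, (1 <= i)%nat -> g i = (/ INR i) ^ m * Sf (/ INR i)) ->
  exists M, forall i, (1 <= i)%nat -> Rabs (g i) <= M / INR i ^ m.
Proof.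
  intros g Sf m [M HM] Hg. exists M. intros i Hi.
  assert (Hx : 1 <= INR i) by (apply (le_INR 1); auto).
  rewrite Hg by auto. rewrite Rabs_mult, Rabs_right.
  2:{ apply Rle_ge, pow_le. left; apply Rinv_0_lt_compat; lra. }
  rewrite pow_inv. unfold Rdiv. rewrite Rmult_comm. apply Rmult_le_compat_r.
  left; apply Rinv_0_lt_compat, pow_lt; lra.
  apply HM. split. left; apply Rinv_0_lt_compat; lra.
  rewrite <- Rinv_1. apply Rinv_le_contravar; lra.
Qed.

Lemma via_y_N : forall (g : nat -> R) (Sf : R -> R) m,
  (exists M, forall y, 0 <= y <= 1 -> Rabs (Sf y) <= M) ->
  (forall i, (1 <= i)%nat -> g i = (/ INR i) ^ m * Sf (/ INR i)) ->
  exists M N, forall i, (N <= i)%nat -> Rabs (g i) <= M / INR i ^ m.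
Proof. intros. destruct (via_y g Sf m H0 H1) as [M HM]. exists M, 1%nat. auto. Qed.

Lemma Rpower_negnat : forall x r, 0 < x -> Rpower x (- INR r) = / x ^ r.
Proof. intros. rewrite Rpower_Ropp, Rpower_pow; auto. Qed.

Lemma glue_int : forall p (r K : nat) (f T : nat -> R), 0 < p < 1 -> (r <= S K)%nat ->
  (exists C N, forall n, (N <= n)%nat -> Rabs (f n - / (INR n * p) ^ r * T n) <= C / INR n ^ (S K)) ->
  exists E, bigO_inv_pow E (S K - r) /\ forall n, (1 <= n)%nat -> f n = / (INR n * p) ^ r * (T n + E n).
Proof.
  intros p r K f T Hp Hr [C [N HC]].
  exists (fun n => (INR n * p) ^ r * f n - T n). split.
  - exists (Rabs C), (max N 1). intros n Hn.
    assert (Hx : 1 <= INR n) by (apply (le_INR 1); lia).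
    assert (Hx0 : 0 < (INR n * p) ^ r) by (apply pow_lt; nra).
    replace ((INR n * p) ^ r * f n - T n) with ((INR n * p) ^ r * (f n - / (INR n * p) ^ r * T n))
      by (field; lra).
    rewrite Rabs_mult, (Rabs_right ((INR n * p) ^ r)) by lra.
    specialize (HC n ltac:(lia)).
    assert (Hsplit : INR n ^ S K = INR n ^ r * INR n ^ (S K - r)) by (rewrite <- pow_add; f_equal; lia).
    assert (0 < INR n ^ r) by (apply pow_lt; lra).
    assert (0 < INR n ^ (S K - r)) by (apply pow_lt; lra).
    assert (Hpr : (INR n * p) ^ r <= INR n ^ r).
    { rewrite Rpow_mult_distr. assert (p ^ r <= 1).
      { apply Rle_trans with (1 ^ r). apply pow_incr; lra. rewrite pow1; lra. }
      assert (0 <= p ^ r) by (apply pow_le; lra). nra. }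
    apply Rle_trans with (INR n ^ r * (Rabs C / INR n ^ S K)).
    + apply Rmult_le_compat. lra. apply Rabs_pos. auto.
      eapply Rle_trans. apply HC. unfold Rdiv. apply Rmult_le_compat_r.
      left; apply Rinv_0_lt_compat, pow_lt; lra. apply Rle_abs.
    + rewrite Hsplit. right. field. split; lra.
  - intros n Hn. assert (Hx : 1 <= INR n) by (apply (le_INR 1); lia).
    assert (Hx0 : 0 < (INR n * p) ^ r) by (apply pow_lt; nra). field. lra.
Qed.

Definition a1 (k : nat) : R := nth k [0; 1; 1; 2; 6; 24; 120] 0.
Definition T1 (p : R) (n : nat) : R := 1 + (1-p) / (INR n * p)
            + (1-p) * (1 + (1-p)) / (INR n * p) ^ 2
            + (1-p) * (1 + 4 * (1-p) + (1-p) ^ 2) / (INR n * p) ^ 3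
            + (1-p) * (1 + (1-p)) * (1 + 10 * (1-p) + (1-p) ^ 2) / (INR n * p) ^ 4
            + (1-p) * (1 + 26 * (1-p) + 66 * (1-p) ^ 2 + 26 * (1-p) ^ 3 + (1-p) ^ 4) / (INR n * p) ^ 5.
Definition S1 (y : R) : R := (720) / ((1 + 1*y)*(1 + 2*y)*(1 + 3*y)*(1 + 4*y)*(1 + 5*y)*(1 + 6*y)).
Definition R1 (p y : R) : R := (- 2520 + 3360*p - 2100*p^2 + 602*p^3 - 63*p^4 + p^5 - 21000*y + 45360*y*p - 33894*y*p^2 + 10710*y*p^3 - 1196*y*p^4 + 20*y*p^5 - 88200*y^2 + 225624*y^2*p - 199794*y^2*p^2 + 70828*y^2*p^3 - 8613*y^2*p^4 + 155*y^2*p^5 - 194880*y^3 + 542304*y^3*p - 531840*y^3*p^2 + 212760*y^3*p^3 - 28924*y^3*p^4 + 580*y^3*p^5 - 211680*y^4 + 617760*y^4*p - 644760*y^4*p^2 + 281520*y^4*p^3 - 43884*y^4*p^4 + 1044*y^4*p^5 - 86400*y^5 + 259200*y^5*p - 280800*y^5*p^2 + 129600*y^5*p^3 - 22320*y^5*p^4 + 720*y^5*p^5) / (p ^ 6 * ((1 + 1*y)*(1 + 2*y)*(1 + 3*y)*(1 + 4*y)*(1 + 5*y)*(1 + 6*y))).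

Lemma rem1 : forall i, (1 <= i)%nat ->
  / INR i ^ 1 - sm (fun k => a1 k * H k i) 7 = (/ INR i) ^ 7 * S1 (/ INR i).
Proof.
  intros i Hi. assert (Hx : 1 <= INR i) by (apply (le_INR 1); auto).
  unfold a1, S1. cbn [sm H nth]. rewrite !S_INR.
  field. repeat split; lra.
Qed.

Lemma diff1 : forall p n, 0 < p -> (1 <= n)%nat ->
  sm (fun k => a1 k * Mk p k n) 7 - / (INR n * p) ^ 1 * T1 p n = (/ INR n) ^ 7 * R1 p (/ INR n).
Proof.
  intros p n Hp Hn. assert (Hx : 1 <= INR n) by (apply (le_INR 1); auto).
  unfold a1, T1, R1. cbn [sm Mk nth]. rewrite !S_INR.
  field. repeat split; lra.
Qed.


Lemma S1_bnd : exists M, forall y, 0 <= y <= 1 -> Rabs (S1 y) <= M.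
Proof. apply (bnd_cont S1 0 1). lra. intros y Hy. unfold S1. auto_derive. repeat split; repeat apply Rmult_integral_contrapositive_currified; lra. Qed.

Lemma R1_bnd : forall p, 0 < p -> exists M, forall y, 0 <= y <= 1 -> Rabs (R1 p y) <= M.
Proof. intros p Hp. apply (bnd_cont (R1 p) 0 1). lra. intros y Hy. unfold R1.
  assert (0 < p ^ 6) by (apply pow_lt; lra). auto_derive. repeat split; repeat apply Rmult_integral_contrapositive_currified; lra. Qed.

Lemma case1 : forall p, 0 < p < 1 -> exists C N, forall n, (N <= n)%nat ->
  Rabs (Ex p n (Gn 1) - / (INR n * p) ^ 1 * T1 p n) <= C / INR n ^ 7.
Proof.
  intros p Hp. apply (int_case p 1 6 a1). auto.
  - apply (via_y (fun i => / INR i ^ 1 - sm (fun k => a1 k * H k i) 7) S1). apply S1_bnd. apply rem1.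
  - apply (via_y_N (fun n => sm (fun k => a1 k * Mk p k n) 7 - / (INR n * p) ^ 1 * T1 p n) (R1 p)).
    apply R1_bnd; lra. intros; apply diff1; auto; lra.
Qed.


Definition a2 (k : nat) : R := nth k [0; 0; 1; 3; 11; 50; 274] 0.
Definition T2 (p : R) (n : nat) : R := 1 + 3 * (1-p) / (INR n * p)
            + (1-p) * (4 + 7 * (1-p)) / (INR n * p) ^ 2
            + 5 * (1-p) * (1 + 6 * (1-p) + 3 * (1-p) ^ 2) / (INR n * p) ^ 3
            + (1-p) * (6 + 91 * (1-p) + 146 * (1-p) ^ 2 + 31 * (1-p) ^ 3) / (INR n * p) ^ 4.
Definition S2 (y : R) : R := (1764 + 720*y) / ((1 + 1*y)*(1 + 2*y)*(1 + 3*y)*(1 + 4*y)*(1 + 5*y)*(1 + 6*y)).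
Definition R2 (p y : R) : R := (- 5754 + 7000*p - 3850*p^2 + 903*p^3 - 63*p^4 - 47950*y + 94500*y*p - 62139*y*p^2 + 16065*y*p^3 - 1196*y*p^4 - 201390*y^2 + 470050*y^2*p - 366289*y^2*p^2 + 106242*y^2*p^3 - 8613*y^2*p^4 - 444976*y^3 + 1129800*y^3*p - 975040*y^3*p^2 + 319140*y^3*p^3 - 28924*y^3*p^4 - 483336*y^4 + 1287000*y^4*p - 1182060*y^4*p^2 + 422280*y^4*p^3 - 43884*y^4*p^4 - 197280*y^5 + 540000*y^5*p - 514800*y^5*p^2 + 194400*y^5*p^3 - 22320*y^5*p^4) / (p ^ 6 * ((1 + 1*y)*(1 + 2*y)*(1 + 3*y)*(1 + 4*y)*(1 + 5*y)*(1 + 6*y))).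

Lemma rem2 : forall i, (1 <= i)%nat ->
  / INR i ^ 2 - sm (fun k => a2 k * H k i) 7 = (/ INR i) ^ 7 * S2 (/ INR i).
Proof.
  intros i Hi. assert (Hx : 1 <= INR i) by (apply (le_INR 1); auto).
  unfold a2, S2. cbn [sm H nth]. rewrite !S_INR.
  field. repeat split; lra.
Qed.

Lemma diff2 : forall p n, 0 < p -> (1 <= n)%nat ->
  sm (fun k => a2 k * Mk p k n) 7 - / (INR n * p) ^ 2 * T2 p n = (/ INR n) ^ 7 * R2 p (/ INR n).
Proof.
  intros p n Hp Hn. assert (Hx : 1 <= INR n) by (apply (le_INR 1); auto).
  unfold a2, T2, R2. cbn [sm Mk nth]. rewrite !S_INR.
  field. repeat split; lra.
Qed.


Lemma S2_bnd : exists M, forall y, 0 <= y <= 1 -> Rabs (S2 y) <= M.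
Proof. apply (bnd_cont S2 0 1). lra. intros y Hy. unfold S2. auto_derive. repeat split; repeat apply Rmult_integral_contrapositive_currified; lra. Qed.

Lemma R2_bnd : forall p, 0 < p -> exists M, forall y, 0 <= y <= 1 -> Rabs (R2 p y) <= M.
Proof. intros p Hp. apply (bnd_cont (R2 p) 0 1). lra. intros y Hy. unfold R2.
  assert (0 < p ^ 6) by (apply pow_lt; lra). auto_derive. repeat split; repeat apply Rmult_integral_contrapositive_currified; lra. Qed.

Lemma case2 : forall p, 0 < p < 1 -> exists C N, forall n, (N <= n)%nat ->
  Rabs (Ex p n (Gn 2) - / (INR n * p) ^ 2 * T2 p n) <= C / INR n ^ 7.
Proof.
  intros p Hp. apply (int_case p 2 6 a2). auto.
  - apply (via_y (fun i => / INR i ^ 2 - sm (fun k => a2 k * H k i) 7) S2). apply S2_bnd. apply rem2.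
  - apply (via_y_N (fun n => sm (fun k => a2 k * Mk p k n) 7 - / (INR n * p) ^ 2 * T2 p n) (R2 p)).
    apply R2_bnd; lra. intros; apply diff2; auto; lra.
Qed.


Definition a3 (k : nat) : R := nth k [0; 0; 0; 1; 6; 35; 225; 1624] 0.
Definition T3 (p : R) (n : nat) : R := 1 + 6 * (1-p) / (INR n * p)
            + 5 * (1-p) * (2 + 5 * (1-p)) / (INR n * p) ^ 2
            + 15 * (1-p) * (1 + 8 * (1-p) + 6 * (1-p) ^ 2) / (INR n * p) ^ 3
            + 7 * (1-p) * (3 + 58 * (1-p) + 128 * (1-p) ^ 2 + 43 * (1-p) ^ 3) / (INR n * p) ^ 4.
Definition S3 (y : R) : R := (13132 + 13068*y + 5040*y^2) / ((1 + 1*y)*(1 + 2*y)*(1 + 3*y)*(1 + 4*y)*(1 + 5*y)*(1 + 6*y)*(1 + 7*y)).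
Definition R3 (p y : R) : R := (- 45472 + 59850*p - 36750*p^2 + 10206*p^3 - 966*p^4 - 522928*y + 1080450*y*p - 785715*y*p^2 + 239148*y*p^3 - 24023*y*p^4 - 3183040*y^2 + 7737975*y^2*p - 6509895*y^2*p^2 + 2185602*y^2*p^3 - 235682*y^2*p^4 - 10992856*y^3 + 29028825*y^3*p - 26731180*y^3*p^2 + 9847260*y^3*p^3 - 1152049*y^3*p^4 - 21326368*y^4 + 59108400*y^4*p - 57662500*y^4*p^2 + 22783080*y^4*p^3 - 2902612*y^4*p^4 - 21222432*y^5 + 60612300*y^5*p - 61387200*y^5*p^2 + 25477200*y^5*p^3 - 3479868*y^5*p^4 - 8184960*y^6 + 23814000*y^6*p - 24696000*y^6*p^2 + 10584000*y^6*p^3 - 1517040*y^6*p^4) / (p ^ 7 * ((1 + 1*y)*(1 + 2*y)*(1 + 3*y)*(1 + 4*y)*(1 + 5*y)*(1 + 6*y)*(1 + 7*y))).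

Lemma rem3 : forall i, (1 <= i)%nat ->
  / INR i ^ 3 - sm (fun k => a3 k * H k i) 8 = (/ INR i) ^ 8 * S3 (/ INR i).
Proof.
  intros i Hi. assert (Hx : 1 <= INR i) by (apply (le_INR 1); auto).
  unfold a3, S3. cbn [sm H nth]. rewrite !S_INR.
  field. repeat split; lra.
Qed.

Lemma diff3 : forall p n, 0 < p -> (1 <= n)%nat ->
  sm (fun k => a3 k * Mk p k n) 8 - / (INR n * p) ^ 3 * T3 p n = (/ INR n) ^ 8 * R3 p (/ INR n).
Proof.
  intros p n Hp Hn. assert (Hx : 1 <= INR n) by (apply (le_INR 1); auto).
  unfold a3, T3, R3. cbn [sm Mk nth]. rewrite !S_INR.
  field. repeat split; lra.
Qed.


Lemma S3_bnd : exists M, forall y, 0 <= y <= 1 -> Rabs (S3 y) <= M.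
Proof. apply (bnd_cont S3 0 1). lra. intros y Hy. unfold S3. auto_derive. repeat split; repeat apply Rmult_integral_contrapositive_currified; lra. Qed.

Lemma R3_bnd : forall p, 0 < p -> exists M, forall y, 0 <= y <= 1 -> Rabs (R3 p y) <= M.
Proof. intros p Hp. apply (bnd_cont (R3 p) 0 1). lra. intros y Hy. unfold R3.
  assert (0 < p ^ 7) by (apply pow_lt; lra). auto_derive. repeat split; repeat apply Rmult_integral_contrapositive_currified; lra. Qed.

Lemma case3 : forall p, 0 < p < 1 -> exists C N, forall n, (N <= n)%nat ->
  Rabs (Ex p n (Gn 3) - / (INR n * p) ^ 3 * T3 p n) <= C / INR n ^ 8.
Proof.
  intros p Hp. apply (int_case p 3 7 a3). auto.
  - apply (via_y (fun i => / INR i ^ 3 - sm (fun k => a3 k * H k i) 8) S3). apply S3_bnd. apply rem3.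
  - apply (via_y_N (fun n => sm (fun k => a3 k * Mk p k n) 8 - / (INR n * p) ^ 3 * T3 p n) (R3 p)).
    apply R3_bnd; lra. intros; apply diff3; auto; lra.
Qed.


Fixpoint fall (r : R) (k : nat) : R := match k with O => 1 | S k' => fall r k' * (- r - INR k') end.
Definition gs (s r t : R) : R := Rpower (1 + s * t) (- r).

Lemma locally_pos : forall s t, 0 < 1 + s * t -> locally t (fun u => 0 < 1 + s * u).
Proof.
  intros s t H.
  assert (Hd : 0 < (1 + s * t) / (Rabs s + 1)) by (apply Rdiv_lt_0_compat; auto; pose proof (Rabs_pos s); lra).
  exists (mkposreal _ Hd). intros u Hu. simpl in Hu. unfold ball in Hu; simpl in Hu.
  unfold AbsRing_ball, abs, minus, plus, opp in Hu; simpl in Hu.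
  assert (Hs : Rabs (s * (u - t)) <= Rabs s * ((1 + s * t) / (Rabs s + 1))).
  { rewrite Rabs_mult. apply Rmult_le_compat_l. apply Rabs_pos. left. auto. }
  assert (Rabs s * ((1 + s * t) / (Rabs s + 1)) < 1 + s * t).
  { pose proof (Rabs_pos s).
    replace (Rabs s * ((1 + s * t) / (Rabs s + 1))) with ((1 + s * t) - (1 + s * t) / (Rabs s + 1)) by (field; lra).
    lra. }
  assert (- Rabs (s * (u - t)) <= s * (u - t)) by (pose proof (Rle_abs (- (s * (u-t)))) as H2; rewrite Rabs_Ropp in H2; lra).
  lra.
Qed.

Lemma is_derive_rp : forall s a t, 0 < 1 + s * t ->
  is_derive (fun u => Rpower (1 + s * u) a) t (s * (a * Rpower (1 + s * t) (a - 1))).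
Proof.
  intros s a t H.
  assert (H1 : is_derive (fun u => 1 + s * u) t s) by (auto_derive; [auto | ring]).
  assert (H0 : is_derive (fun x => Rpower x a) (1 + s * t) (a * Rpower (1 + s * t) (a - 1))).
  { apply is_derive_Reals. apply derivable_pt_lim_power. auto. }
  exact (is_derive_comp (fun x => Rpower x a) (fun u => 1 + s * u) t _ _ H0 H1).
Qed.

Lemma Dn_gs : forall s r k t, 0 < 1 + s * t ->
  Derive_n (gs s r) k t = fall r k * s ^ k * Rpower (1 + s * t) (- r - INR k).
Proof.
  intros s r k; induction k; intros t Ht.
  - simpl. unfold gs. replace (- r - 0) with (- r) by ring. ring.
  - simpl Derive_n.
    rewrite (Derive_ext_loc _ (fun u => fall r k * s ^ k * Rpower (1 + s * u) (- r - INR k))).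
    2:{ generalize (locally_pos s t Ht). apply filter_imp. intros u Hu. apply IHk. auto. }
    apply is_derive_unique.
    replace (fall r (S k) * s ^ S k * Rpower (1 + s * t) (- r - INR (S k)))
      with (fall r k * s ^ k * (s * ((- r - INR k) * Rpower (1 + s * t) ((- r - INR k) - 1)))).
    2:{ cbn [fall pow]. rewrite S_INR. replace (- r - (INR k + 1)) with (- r - INR k - 1) by ring. ring. }
    apply (is_derive_scal (fun u => Rpower (1 + s * u) (- r - INR k))). apply is_derive_rp. auto.
Qed.

Lemma exn_gs : forall s r k t, 0 < 1 + s * t -> ex_derive_n (gs s r) k t.
Proof.
  intros s r k t Ht. destruct k. simpl; auto. simpl.
  apply (ex_derive_ext_loc (fun u => fall r k * s ^ k * Rpower (1 + s * u) (- r - INR k))).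
  { generalize (locally_pos s t Ht). apply filter_imp. intros u Hu. symmetry. apply Dn_gs. auto. }
  eexists. apply (is_derive_scal (fun u => Rpower (1 + s * u) (- r - INR k))). apply is_derive_rp. auto.
Qed.

Lemma Rpower_1_base : forall x, Rpower 1 x = 1.
Proof. intros. unfold Rpower. rewrite ln_1, Rmult_0_r. apply exp_0. Qed.

Lemma Rpower_base_le : forall x a, 1/2 <= x -> a <= 0 -> Rpower x a <= Rpower (1/2) a.
Proof. intros x a Hx Ha. unfold Rpower.
  assert (ln (1/2) <= ln x).
  { destruct (Req_dec x (1/2)) as [E|E]. rewrite E; lra. left; apply ln_increasing; lra. }
  assert (Hle : a * ln x <= a * ln (1/2)) by nra.
  destruct (Rle_lt_or_eq_dec _ _ Hle) as [L|E2]. left; apply exp_increasing; auto. rewrite E2; lra.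
Qed.

Lemma pow6_nonneg : forall u, 0 <= u ^ 6.
Proof. intros. replace (u ^ 6) with ((u ^ 3) ^ 2) by ring. apply pow2_ge_0. Qed.

Definition Tp (r u : R) : R :=
  1 - r * u + r * (r + 1) / 2 * u ^ 2 - r * (r + 1) * (r + 2) / 6 * u ^ 3
  + r * (r + 1) * (r + 2) * (r + 3) / 24 * u ^ 4 - r * (r + 1) * (r + 2) * (r + 3) * (r + 4) / 120 * u ^ 5.

Lemma taylor_sum : forall r s v,
  sum_f_R0 (fun m => (v - 0) ^ m / INR (fact m) * Derive_n (gs s r) m 0) 5 = Tp r (s * v).
Proof.
  intros r s v. cbn [sum_f_R0].
  rewrite !Dn_gs by lra. rewrite !Rmult_0_r, !Rplus_0_r, !Rpower_1_base.
  unfold Tp. simpl. field.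
Qed.

Lemma taylor_bound : forall r, 0 < r -> exists C, 0 <= C /\
  forall u, -1/2 <= u -> Rabs (Rpower (1 + u) (- r) - Tp r u) <= C * u ^ 6.
Proof.
  intros r Hr.
  set (C := Rabs (fall r 6) / 720 * Rpower (1/2) (- r - INR 6)).
  assert (HC : 0 <= C).
  { unfold C. apply Rmult_le_pos. apply Rdiv_le_0_compat. apply Rabs_pos. lra. unfold Rpower. left; apply exp_pos. }
  exists C. split; auto. intros u Hu.
  assert (Hpe : - r - INR 6 <= 0) by (simpl; lra).
  destruct (Rtotal_order u 0) as [Hneg|[H0|Hpos]].
  -
    destruct (Taylor_Lagrange (gs (-1) r) 5 0 (- u) ltac:(lra)) as [z [Hz Heq]].
    { intros t Ht k _. apply exn_gs. lra. }
    rewrite taylor_sum in Heq. rewrite Dn_gs in Heq by lra. unfold gs in Heq.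
    replace (1 + -1 * - u) with (1 + u) in Heq by ring.
    replace (-1 * - u) with u in Heq by ring.
    rewrite Heq.
    replace (Tp r u + (- u - 0) ^ 6 / INR (fact 6) * (fall r 6 * (-1) ^ 6 * Rpower (1 + -1 * z) (- r - INR 6)) - Tp r u)
      with (u ^ 6 * (fall r 6 / 720) * Rpower (1 + -1 * z) (- r - INR 6)) by (simpl; field).
    rewrite !Rabs_mult. rewrite (Rabs_right (u ^ 6)) by (apply Rle_ge; apply pow6_nonneg).
    rewrite (Rabs_right (Rpower _ _)) by (unfold Rpower; left; apply exp_pos).
    unfold C. unfold Rdiv. rewrite Rabs_mult, (Rabs_right (/ 720)) by lra.
    pose proof (Rpower_base_le (1 + -1 * z) (- r - INR 6) ltac:(lra) Hpe).
    assert (0 <= u ^ 6 * (Rabs (fall r 6) * / 720)).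
    { apply Rmult_le_pos. apply pow6_nonneg. apply Rmult_le_pos. apply Rabs_pos. lra. }
    nra.
  - subst. unfold Tp. rewrite Rplus_0_r, Rpower_1_base. replace (1 - r * 0 + r * (r + 1) / 2 * 0 ^ 2 - r * (r + 1) * (r + 2) / 6 * 0 ^ 3 + r * (r + 1) * (r + 2) * (r + 3) / 24 * 0 ^ 4 - r * (r + 1) * (r + 2) * (r + 3) * (r + 4) / 120 * 0 ^ 5) with 1 by ring. rewrite Rminus_diag, Rabs_R0. simpl. nra.
  - destruct (Taylor_Lagrange (gs 1 r) 5 0 u Hpos) as [z [Hz Heq]].
    { intros t Ht k _. apply exn_gs. lra. }
    rewrite taylor_sum in Heq. rewrite Dn_gs in Heq by lra. unfold gs in Heq.
    replace (1 * u) with u in Heq by ring.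
    rewrite Heq.
    replace (Tp r u + (u - 0) ^ 6 / INR (fact 6) * (fall r 6 * 1 ^ 6 * Rpower (1 + 1 * z) (- r - INR 6)) - Tp r u)
      with (u ^ 6 * (fall r 6 / 720) * Rpower (1 + 1 * z) (- r - INR 6)) by (simpl; field).
    rewrite !Rabs_mult. rewrite (Rabs_right (u ^ 6)) by (apply Rle_ge; apply pow_le; lra).
    rewrite (Rabs_right (Rpower _ _)) by (unfold Rpower; left; apply exp_pos).
    unfold C. unfold Rdiv. rewrite Rabs_mult, (Rabs_right (/ 720)) by lra.
    pose proof (Rpower_base_le (1 + 1 * z) (- r - INR 6) ltac:(lra) Hpe).
    assert (0 <= u ^ 6 * (Rabs (fall r 6) * / 720)).
    { apply Rmult_le_pos. apply pow_le; lra. apply Rmult_le_pos. apply Rabs_pos. lra. }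
    nra.
Qed.

Lemma Rpower_pos : forall x a, 0 < Rpower x a.
Proof. intros; unfold Rpower; apply exp_pos. Qed.

Lemma Rpower_ratio : forall x m r, 0 < x -> 0 < m ->
  Rpower m r * Rpower x (- r) = Rpower (x / m) (- r).
Proof. intros. unfold Rpower. rewrite <- exp_plus. f_equal. rewrite ln_div by auto. ring. Qed.

Lemma Rpower_le1 : forall x r, 1 <= x -> 0 < r -> Rpower x (- r) <= 1.
Proof. intros. unfold Rpower. rewrite <- exp_0.
  assert (0 <= ln x) by (rewrite <- ln_1; destruct (Req_dec x 1) as [E|E]; [rewrite E; lra| left; apply ln_increasing; lra]).
  destruct (Req_dec (- r * ln x) 0) as [E|E]. rewrite E; lra. left. apply exp_increasing. nra. Qed.

Lemma ln2_lt1 : ln 2 < 1.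
Proof. rewrite <- ln_exp with 1. apply ln_increasing. lra.
  pose proof (exp_ineq1 1 ltac:(lra)). lra. Qed.

Lemma ln2_pos : 0 < ln 2.
Proof. rewrite <- ln_1. apply ln_increasing; lra. Qed.

Lemma Rpower_mono_base : forall x y r, 0 < x -> x <= y -> 0 < r -> Rpower x r <= Rpower y r.
Proof. intros. unfold Rpower. destruct (Req_dec x y) as [E|E]. subst; lra.
  left. apply exp_increasing. assert (ln x < ln y) by (apply ln_increasing; lra). nra. Qed.

Lemma Rpower_mono_exp : forall x a b, 1 <= x -> a <= b -> Rpower x a <= Rpower x b.
Proof. intros. unfold Rpower.
  assert (0 <= ln x) by (rewrite <- ln_1; destruct (Req_dec x 1) as [E|E]; [rewrite E; lra| left; apply ln_increasing; lra]).
  destruct (Req_dec (a * ln x) (b * ln x)) as [E|E]. rewrite E; lra. left. apply exp_increasing. nra. Qed.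

Lemma tail_ge1 : forall m i, 0 < m -> INR i < m / 2 -> 1 <= Rpower 2 (m / 2) * (/ 2) ^ i.
Proof. intros. rewrite pow_inv, <- Rpower_negnat by lra. rewrite <- Rpower_plus.
  unfold Rpower. rewrite <- exp_0. left. apply exp_increasing. pose proof ln2_pos. nra. Qed.

Lemma rho_lt1 : forall p, 0 < p < 1 -> 0 < Rpower 2 (p / 2) * (1 - p / 2) < 1.
Proof. intros p Hp. split. apply Rmult_lt_0_compat. apply Rpower_pos. lra.
  assert (H1 : Rpower 2 (p / 2) < exp (p / 2)).
  { unfold Rpower. apply exp_increasing. pose proof ln2_lt1. nra. }
  assert (H2 : 1 + - (p / 2) < exp (- (p / 2))) by (apply exp_ineq1; lra).
  assert (H3 : exp (p / 2) * exp (- (p / 2)) = 1) by (rewrite <- exp_plus; replace (p/2 + - (p/2)) with 0 by ring; apply exp_0).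
  pose proof (exp_pos (p/2)). pose proof (exp_pos (- (p/2))).
  apply Rle_lt_trans with (exp (p / 2) * (1 - p / 2)). apply Rmult_le_compat_r; lra. nra.
Qed.

Lemma Rpower2_n : forall p n, Rpower 2 (INR n * p / 2) = (Rpower 2 (p / 2)) ^ n.
Proof. intros. rewrite <- Rpower_pow by apply Rpower_pos. rewrite Rpower_mult. f_equal. field. Qed.

Lemma Tp_bnd : forall r p, 0 < p -> exists M, 0 <= M /\ forall u, -1 <= u <= / p -> Rabs (Tp r u) <= M.
Proof. intros r p Hp. destruct (bnd_cont (Tp r) (-1) (/ p)) as [M HM].
  { assert (0 < / p) by (apply Rinv_0_lt_compat; auto). lra. }
  { intros. unfold Tp. auto_derive. auto. }
  exists (Rabs M). split. apply Rabs_pos. intros. eapply Rle_trans. apply HM; auto. apply Rle_abs. Qed.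

Lemma pointwise : forall r p n i C6 MT, 0 < r -> 0 < p < 1 -> (1 <= n)%nat -> (i <= n)%nat -> 0 <= C6 -> 0 <= MT ->
  (forall u, -1/2 <= u -> Rabs (Rpower (1 + u) (- r) - Tp r u) <= C6 * u ^ 6) ->
  (forall u, -1 <= u <= / p -> Rabs (Tp r u) <= MT) ->
  Rabs (Rpower (INR n * p) r * G0 r i - Tp r ((INR i - INR n * p) / (INR n * p)))
   <= C6 * ((INR i - INR n * p) / (INR n * p)) ^ 6 + (Rpower (INR n * p) r + MT) * Rpower 2 (INR n * p / 2) * (/ 2) ^ i.
Proof.
  intros r p n i C6 MT Hr Hp Hn Hi HC6 HMT Htay HT.
  assert (Hx : 1 <= INR n) by (apply (le_INR 1); auto).
  assert (Hm : 0 < INR n * p) by nra.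
  set (m := INR n * p) in *.
  set (u := (INR i - m) / m).
  assert (Htail0 : 0 <= (Rpower m r + MT) * Rpower 2 (m / 2) * (/ 2) ^ i).
  { apply Rmult_le_pos. apply Rmult_le_pos. pose proof (Rpower_pos m r). lra. left; apply Rpower_pos.
    apply pow_le. lra. }
  assert (Hu6 : 0 <= C6 * u ^ 6) by (apply Rmult_le_pos; auto; apply pow6_nonneg).
  assert (Hiu : INR i = m * (1 + u)) by (unfold u; field; lra).
  destruct (Rle_lt_dec (-1/2) u) as [Hu|Hu].
  - assert (Hi0 : 0 < INR i).
    { rewrite Hiu. nra. }
    destruct i as [|j]. simpl in Hi0; lra.
    unfold G0. rewrite Rpower_ratio by auto.
    replace (INR (S j) / m) with (1 + u) by (unfold u; field; lra).
    specialize (Htay u Hu). lra.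
  - assert (HiI : INR i < m / 2).
    { rewrite Hiu. nra. }
    assert (HG : 0 <= Rpower m r * G0 r i <= Rpower m r).
    { destruct i as [|j]. simpl. pose proof (Rpower_pos m r). lra.
      unfold G0. pose proof (Rpower_pos m r). pose proof (Rpower_pos (INR (S j)) (- r)).
      assert (Rpower (INR (S j)) (- r) <= 1) by (apply Rpower_le1; auto; apply (le_INR 1); lia). nra. }
    assert (HTu : Rabs (Tp r u) <= MT).
    { apply HT. split.
      - pose proof (pos_INR i). nra.
      - assert (INR i <= INR n) by (apply le_INR; auto).
        assert (E : / p = (m * / p - m) / m + 1) by (unfold m; field; lra).
        assert (INR n = m * / p) by (unfold m; field; lra).
        assert (u <= (m * / p - m) / m) by (unfold u; unfold Rdiv; apply Rmult_le_compat_r; [left; apply Rinv_0_lt_compat; lra | lra]).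
        lra. }
    pose proof (tail_ge1 m i Hm HiI).
    assert (HB : Rpower m r + MT <= (Rpower m r + MT) * Rpower 2 (m / 2) * (/ 2) ^ i).
    { rewrite Rmult_assoc. pose proof (Rpower_pos m r). nra. }
    eapply Rle_trans. unfold Rminus. apply Rabs_triang. rewrite Rabs_Ropp.
    rewrite Rabs_right by lra. lra.
Qed.

Lemma nat_above : forall r, 0 < r -> exists m : nat, r <= INR m.
Proof. intros r Hr. destruct (archimed r) as [H1 H2].
  assert (Hz : (0 < up r)%Z) by (apply lt_IZR; lra).
  exists (Z.to_nat (up r)). rewrite INR_IZR_INZ, Z2Nat.id by lia. lra. Qed.

Definition ta (r m : R) (j : nat) : R :=
  nth j [1; - r / m; r * (r + 1) / 2 / m ^ 2; - (r * (r + 1) * (r + 2) / 6) / m ^ 3;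
         r * (r + 1) * (r + 2) * (r + 3) / 24 / m ^ 4; - (r * (r + 1) * (r + 2) * (r + 3) * (r + 4) / 120) / m ^ 5] 0.

Definition ExTv (r p : R) (n : nat) : R :=
  1 + r * (r + 1) / 2 * mc2 p n / (INR n * p) ^ 2 - r * (r + 1) * (r + 2) / 6 * mc3 p n / (INR n * p) ^ 3
  + r * (r + 1) * (r + 2) * (r + 3) / 24 * mc4 p n / (INR n * p) ^ 4
  - r * (r + 1) * (r + 2) * (r + 3) * (r + 4) / 120 * mc5 p n / (INR n * p) ^ 5.

Lemma ExT : forall r p n, 0 < p -> (1 <= n)%nat ->
  Ex p n (fun i => Tp r ((INR i - INR n * p) / (INR n * p))) = ExTv r p n.
Proof.
  intros r p n Hp Hn. assert (Hx : 1 <= INR n) by (apply (le_INR 1); auto).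
  assert (Hm : INR n * p <> 0) by nra.
  rewrite (Ex_ext p n _ (fun i => sm (fun j => ta r (INR n * p) j * (INR i - INR n * p) ^ j) 6)).
  2:{ intros i _. unfold Tp, ta. cbn [sm nth]. field. split; lra. }
  rewrite Ex_polyd. unfold ta. cbn [sm nth].
  rewrite mom0, mom1, mom2, mom3, mom4, mom5. unfold ExTv. field. split; lra.
Qed.

Definition tgtR (r p : R) (n : nat) : R :=
  1 + r * (r + 1) * (1 - p) / (2 * (INR n * p))
  + r * (r + 1) * (r + 2) * (1 - p) * (4 + (1 - p) + 3 * r * (1 - p)) / (24 * (INR n * p) ^ 2).

Definition Sres (r p y : R) : R :=
  r * (r + 1) * (r + 2) * (r + 3) / 24 * (1 - p) * (1 - 6 * p * (1 - p)) / p ^ 3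
  - r * (r + 1) * (r + 2) * (r + 3) * (r + 4) / 120 *
    (y * (p - 15 * p ^ 2 + 50 * p ^ 3 - 60 * p ^ 4 + 24 * p ^ 5) + (10 * p ^ 2 - 40 * p ^ 3 + 50 * p ^ 4 - 20 * p ^ 5)) / p ^ 5.

Lemma resid1 : forall r p n, 0 < p -> (1 <= n)%nat ->
  ExTv r p n - tgtR r p n = (/ INR n) ^ 3 * Sres r p (/ INR n).
Proof. intros r p n Hp Hn. assert (Hx : 1 <= INR n) by (apply (le_INR 1); auto).
  unfold ExTv, tgtR, Sres, mc2, mc3, mc4, mc5. field. split; lra. Qed.

Definition S6 (p y : R) : R :=
  (15 * p ^ 3 - 45 * p ^ 4 + 45 * p ^ 5 - 15 * p ^ 6
   + y * (25 * p ^ 2 - 180 * p ^ 3 + 415 * p ^ 4 - 390 * p ^ 5 + 130 * p ^ 6)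
   + y ^ 2 * (p - 31 * p ^ 2 + 180 * p ^ 3 - 390 * p ^ 4 + 360 * p ^ 5 - 120 * p ^ 6)) / p ^ 6.

Lemma m6id : forall p n, 0 < p -> (1 <= n)%nat ->
  mc6 p n / (INR n * p) ^ 6 = (/ INR n) ^ 3 * S6 p (/ INR n).
Proof. intros p n Hp Hn. assert (Hx : 1 <= INR n) by (apply (le_INR 1); auto).
  unfold mc6, S6. field. split; lra. Qed.

Lemma gen_case : forall p r, 0 < p < 1 -> 0 < r -> exists C N, forall n, (N <= n)%nat ->
  Rabs (Rpower (INR n * p) r * Ex p n (G0 r) - tgtR r p n) <= C / INR n ^ 3.
Proof.
  intros p r Hp Hr.
  destruct (taylor_bound r Hr) as [C6 [HC6 Htay]].
  destruct (Tp_bnd r p ltac:(lra)) as [MT [HMT HT]].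
  destruct (via_y (fun n => ExTv r p n - tgtR r p n) (Sres r p) 3) as [M1 HM1].
  { apply bnd_cont. lra. intros y Hy. unfold Sres.
    assert (0 < p ^ 3) by (apply pow_lt; lra). assert (0 < p ^ 5) by (apply pow_lt; lra).
    auto_derive. split; lra. }
  { intros; apply resid1; auto; lra. }
  destruct (via_y (fun n => mc6 p n / (INR n * p) ^ 6) (S6 p) 3) as [M6 HM6].
  { apply bnd_cont. lra. intros y Hy. unfold S6.
    assert (0 < p ^ 6) by (apply pow_lt; lra). auto_derive. lra. }
  { intros; apply m6id; auto; lra. }
  destruct (nat_above r Hr) as [m Hmr].
  set (rho := Rpower 2 (p / 2) * (1 - p / 2)).
  assert (Hrho : 0 < rho < 1) by (apply rho_lt1; auto).
  destruct (geom_decay rho (m + 3) ltac:(lra)) as [Kr HKr].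
  assert (HKr0 : 0 <= Kr).
  { specialize (HKr 1%nat (le_n 1)). rewrite INR_1, pow1, pow_1 in HKr. lra. }
  exists (M1 + C6 * M6 + (1 + MT) * Kr), 1%nat. intros n Hn.
  assert (Hx : 1 <= INR n) by (apply (le_INR 1); auto).
  assert (Hmu : 0 < INR n * p) by nra.
  assert (Hn3 : 0 < INR n ^ 3) by (apply pow_lt; lra).
  assert (Hnm : 0 < INR n ^ m) by (apply pow_lt; lra).
  assert (Hdec : Rpower (INR n * p) r * Ex p n (G0 r) - tgtR r p n =
     (ExTv r p n - tgtR r p n) +
     Ex p n (fun i => Rpower (INR n * p) r * G0 r i - Tp r ((INR i - INR n * p) / (INR n * p)))).
  { rewrite Ex_minus, Ex_scal, ExT by (auto; lra). ring. }
  rewrite Hdec.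
  assert (Hbd : Rabs (Ex p n (fun i => Rpower (INR n * p) r * G0 r i - Tp r ((INR i - INR n * p) / (INR n * p))))
     <= C6 * (mc6 p n / (INR n * p) ^ 6) + (Rpower (INR n * p) r + MT) * rho ^ n).
  { eapply Rle_trans. apply Ex_abs. lra.
    eapply Rle_trans. apply Ex_le. lra. intros i Hi. apply (pointwise r p n i C6 MT); auto.
    rewrite Ex_plus, Ex_scal, Ex_scal.
    rewrite (Ex_ext p n (fun i => ((INR i - INR n * p) / (INR n * p)) ^ 6)
                       (fun i => / (INR n * p) ^ 6 * (INR i - INR n * p) ^ 6))
      by (intros; unfold Rdiv; rewrite Rpow_mult_distr, pow_inv; ring).
    rewrite Ex_scal. change (Ex p n (fun i => (INR i - INR n * p) ^ 6)) with (mom p n 6). rewrite mom6.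
    change (pow (/ 2)) with (fun i => (/ 2) ^ i). rewrite (Ex_geom p n (/ 2)). rewrite Rpower2_n.
    unfold rho. rewrite (Rpow_mult_distr (Rpower 2 (p / 2))). replace (1 - p + p * / 2) with (1 - p / 2) by field.
    right. unfold Rdiv. ring. }
  assert (H1 : Rabs (ExTv r p n - tgtR r p n) <= M1 / INR n ^ 3) by (apply HM1; auto).
  assert (H6 : mc6 p n / (INR n * p) ^ 6 <= M6 / INR n ^ 3) by (eapply Rle_trans; [apply Rle_abs| apply HM6; auto]).
  assert (Hpm : Rpower (INR n * p) r <= INR n ^ m).
  { apply Rle_trans with (Rpower (INR n) r). apply Rpower_mono_base; auto. nra.
    rewrite <- Rpower_pow by lra. apply Rpower_mono_exp; auto. }
  assert (Hrn : rho ^ n <= Kr / INR n ^ (m + 3)) by (apply HKr; auto).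
  assert (Hsplit : INR n ^ (m + 3) = INR n ^ m * INR n ^ 3) by apply pow_add.
  assert (Htl : (Rpower (INR n * p) r + MT) * rho ^ n <= (1 + MT) * Kr / INR n ^ 3).
  { assert (0 <= rho ^ n) by (apply pow_le; lra).
    assert (A1 : Rpower (INR n * p) r + MT <= (1 + MT) * INR n ^ m).
    { assert (1 <= INR n ^ m) by (apply Rle_trans with (1 ^ m); [rewrite pow1; lra| apply pow_incr; lra]). nra. }
    apply Rle_trans with ((1 + MT) * INR n ^ m * (Kr / INR n ^ (m + 3))).
    apply Rmult_le_compat; auto. pose proof (Rpower_pos (INR n * p) r). lra.
    rewrite Hsplit. right. field. split; lra. }
  assert (HC6' : C6 * (mc6 p n / (INR n * p) ^ 6) <= C6 * (M6 / INR n ^ 3)) by (apply Rmult_le_compat_l; auto).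
  eapply Rle_trans. apply Rabs_triang.
  replace ((M1 + C6 * M6 + (1 + MT) * Kr) / INR n ^ 3)
    with (M1 / INR n ^ 3 + C6 * (M6 / INR n ^ 3) + (1 + MT) * Kr / INR n ^ 3) by (field; lra).
  lra.
Qed.

Lemma G0_Gn : forall p n (r : nat), f_r p (INR r) n = Ex p n (Gn r).
Proof. intros. rewrite f_r_Ex. apply Ex_ext. intros [|j] _. reflexivity.
  unfold G0, Gn. apply Rpower_negnat. apply lt_0_INR; lia. Qed.

Theorem corollary3 (p : R) (hp0 : 0 < p) (hp1 : p < 1) :
  let q := 1 - p in
  (forall r : R, 0 < r ->
     exists E : nat -> R, bigO_inv_pow E 3 /\
       forall n : nat, (1 <= n)%nat ->
         f_r p r n = / Rpower (INR n * p) r *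
           (1 + r * (r + 1) * q / (2 * (INR n * p))
              + r * (r + 1) * (r + 2) * q * (4 + q + 3 * r * q)
                  / (24 * (INR n * p) ^ 2)
              + E n)) /\
  (exists E : nat -> R, bigO_inv_pow E 6 /\
     forall n : nat, (1 <= n)%nat ->
       f_r p 1 n = / (INR n * p) *
         (1 + q / (INR n * p)
            + q * (1 + q) / (INR n * p) ^ 2
            + q * (1 + 4 * q + q ^ 2) / (INR n * p) ^ 3
            + q * (1 + q) * (1 + 10 * q + q ^ 2) / (INR n * p) ^ 4
            + q * (1 + 26 * q + 66 * q ^ 2 + 26 * q ^ 3 + q ^ 4) / (INR n * p) ^ 5
            + E n)) /\
  (exists E : nat -> R, bigO_inv_pow E 5 /\
     forall n : nat, (1 <= n)%nat ->
       f_r p 2 n = / (INR n * p) ^ 2 *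
         (1 + 3 * q / (INR n * p)
            + q * (4 + 7 * q) / (INR n * p) ^ 2
            + 5 * q * (1 + 6 * q + 3 * q ^ 2) / (INR n * p) ^ 3
            + q * (6 + 91 * q + 146 * q ^ 2 + 31 * q ^ 3) / (INR n * p) ^ 4
            + E n)) /\
  (exists E : nat -> R, bigO_inv_pow E 5 /\
     forall n : nat, (1 <= n)%nat ->
       f_r p 3 n = / (INR n * p) ^ 3 *
         (1 + 6 * q / (INR n * p)
            + 5 * q * (2 + 5 * q) / (INR n * p) ^ 2
            + 15 * q * (1 + 8 * q + 6 * q ^ 2) / (INR n * p) ^ 3
            + 7 * q * (3 + 58 * q + 128 * q ^ 2 + 43 * q ^ 3) / (INR n * p) ^ 4
            + E n)).
Proof.
  cbv zeta. assert (Hp : 0 < p < 1) by lra.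
  split; [|split; [|split]].
  - intros r Hr. destruct (gen_case p r Hp Hr) as [C [N HC]].
    exists (fun n => Rpower (INR n * p) r * f_r p r n - tgtR r p n). split.
    + exists (Rabs C), (max N 1). intros n Hn.
      assert (Hx : 1 <= INR n) by (apply (le_INR 1); lia).
      rewrite f_r_Ex. eapply Rle_trans. apply HC. lia.
      unfold Rdiv. apply Rmult_le_compat_r. left; apply Rinv_0_lt_compat, pow_lt; lra. apply Rle_abs.
    + intros n Hn. pose proof (Rpower_pos (INR n * p) r). assert (Hx : 1 <= INR n) by (apply (le_INR 1); lia).
      unfold tgtR. field. repeat split; lra.
  - destruct (glue_int p 1 6 (f_r p 1) (T1 p) Hp ltac:(lia)) as [E [HE HEq]].
    { destruct (case1 p Hp) as [C [N HC]]. exists C, N. intros n Hn.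
      replace 1 with (INR 1) by reflexivity. rewrite G0_Gn. apply HC; auto. }
    exists E. split. exact HE. intros n Hn. rewrite HEq by auto. unfold T1. rewrite pow_1. reflexivity.
  - destruct (glue_int p 2 6 (f_r p 2) (T2 p) Hp ltac:(lia)) as [E [HE HEq]].
    { destruct (case2 p Hp) as [C [N HC]]. exists C, N. intros n Hn.
      replace 2 with (INR 2) by (simpl; ring). rewrite G0_Gn. apply HC; auto. }
    exists E. split. exact HE. intros n Hn. rewrite HEq by auto. unfold T2. reflexivity.
  - destruct (glue_int p 3 7 (f_r p 3) (T3 p) Hp ltac:(lia)) as [E [HE HEq]].
    { destruct (case3 p Hp) as [C [N HC]]. exists C, N. intros n Hn.
      replace 3 with (INR 3) by (simpl; ring). rewrite G0_Gn. apply HC; auto. }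
    exists E. split. exact HE. intros n Hn. rewrite HEq by auto. unfold T3. reflexivity.
Qed.
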